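(* Assume the Bellman setting below and hypotheses (H1), (H3), (H4). Then the Bellman problem $\sup_{P\in\mathcal P}\{-A(P)U+y(P)\}=0$ has at most one solution $U\in\mathbb R^{M+1}$.
   Context: Bellman setting: Let $M\ge 0$ be an integer and $\mathcal P=\mathcal P_0\times\cdots\times\mathcal P_M$ a product of nonempty sets; write $P=(P_0,\dots,P_M)\in\mathcal P$. Let $A:\mathcal P\to\mathbb R^{(M+1)\times(M+1)}$ and $y:\mathcal P\to\mathbb R^{M+1}$ be row-decoupled: for each $i$, the $i$-th row of $A(P)$ and the $i$-th entry of $y(P)$ depend only on $P_i$. Inequalities between vectors are entrywise and suprema of families of vectors are entrywise. The Bellman problem is to find $U$ with $\sup_{P\in\mathcal P}\{-A(P)U+y(P)\}=0$. Row $i$ of a matrix $(a_{ij})$ is strictly diagonally dominant (s.d.d.) if $|a_{ii}|>\sum_{j\ne i}|a_{ij}|$, weakly diagonally dominant (w.d.d.) if $|a_{ii}|\ge\sum_{j\ne i}|a_{ij}|$; a matrix is w.d.d. if all rows are. A Z-matrix is a real matrix with nonpositive off-diagonal entries. (H1): $P\mapsto A(P)^{-1}$ is bounded on $\{P: A(P)\text{ nonsingular}\}$. (H3): for each $P$, $A(P)$ is a w.d.d. Z-matrix with nonnegative diagonal entries, and $[A(P)]_{ii}\le1$ whenever row $i$ of $A(P)$ is not s.d.d. Define $[\hat y(P)]_i=[y(P)]_i$ if row $i$ of $A(P)$ is not s.d.d. and $[\hat y(P)]_i=-\infty$ otherwise, and the operator $\mathbb M$ on vectors with entries in $[-\infty,\infty)$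 by $[\mathbb M X]_i=\sup_{P\in\mathcal P}\{(1-[A(P)]_{ii})X_i-\sum_{j\ne i}[A(P)]_{ij}X_j+[\hat y(P)]_i\}$ (i.e. $\mathbb M=I+\mathbb A$ with $\mathbb AU=\sup_P\{-A(P)U+\hat y(P)\}$), with the conventions $0\cdot(-\infty)=0$ and that any sum containing $-\infty$ equals $-\infty$; $\mathbb M^0=I$, $\mathbb M^k=\mathbb M\circ\mathbb M^{k-1}$. (H4): for each $U\in\mathbb R^{M+1}$ and each $i\in\{0,\dots,M\}$ there exist integers $0\le m_1<m_2$ with $[\mathbb M^{m_1}U]_i>[\mathbb M^{m_2}U]_i$. *)

(* Defs.v *)
From Stdlib Require Import Reals ClassicalEpsilon.
From mathcomp Require Import all_boot.

Set Implicit Arguments.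
Unset Strict Implicit.
Local Open Scope R_scope.

Definition rmat (n : nat) := 'I_n -> 'I_n -> R.
Definition rvec (n : nat) := 'I_n -> R.

Definition rsum (n : nat) (F : 'I_n -> R) : R := \big[Rplus/R0]_(j : 'I_n) F j.
Definition rsum_off (n : nat) (i : 'I_n) (F : 'I_n -> R) : R :=
  \big[Rplus/R0]_(j : 'I_n | j != i) F j.

Definition mxmul (n : nat) (A B : rmat n) : rmat n :=
  fun i k => rsum (fun j => (A i j * B j k)).
Definition mxid (n : nat) : rmat n := fun i j => if i == j then 1 else 0.

Definition is_inverse (n : nat) (A B : rmat n) : Prop :=
  mxmul A B = @mxid n /\ mxmul B A = @mxid n.

Definition row_sdd (n : nat) (A : rmat n) (i : 'I_n) : Prop :=
  (rsum_off i (fun j => Rabs (A i j)) < Rabs (A i i)).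
Definition row_wdd (n : nat) (A : rmat n) (i : 'I_n) : Prop :=
  (rsum_off i (fun j => Rabs (A i j)) <= Rabs (A i i)).
Definition wdd (n : nat) (A : rmat n) : Prop := forall i, row_wdd A i.
Definition Zmatrix (n : nat) (A : rmat n) : Prop :=
  forall i j, i <> j -> (A i j <= 0).

Definition policy (M : nat) (Pset : 'I_M.+1 -> Type) := forall i, Pset i.

Definition row_decoupled (M : nat) (Pset : 'I_M.+1 -> Type)
  (A : policy Pset -> rmat M.+1) (y : policy Pset -> rvec M.+1) : Prop :=
  forall (P Q : policy Pset) (i : 'I_M.+1), P i = Q i ->
    (forall j, A P i j = A Q i j) /\ y P i = y Q i.

Definition bellman_term (M : nat) (Pset : 'I_M.+1 -> Type)
  (A : policy Pset -> rmat M.+1) (y : policy Pset -> rvec M.+1)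
  (U : rvec M.+1) (P : policy Pset) (i : 'I_M.+1) : R :=
  (- rsum (fun j => A P i j * U j) + y P i).

Definition bellman_solution (M : nat) (Pset : 'I_M.+1 -> Type)
  (A : policy Pset -> rmat M.+1) (y : policy Pset -> rvec M.+1)
  (U : rvec M.+1) : Prop :=
  forall i, is_lub (fun r => exists P : policy Pset, r = bellman_term A y U P i) 0.

Definition H1 (M : nat) (Pset : 'I_M.+1 -> Type) (A : policy Pset -> rmat M.+1) : Prop :=
  exists C : R, forall (P : policy Pset) (B : rmat M.+1),
    is_inverse (A P) B -> forall i j, (Rabs (B i j) <= C).

Definition H3 (M : nat) (Pset : 'I_M.+1 -> Type) (A : policy Pset -> rmat M.+1) : Prop :=
  forall P : policy Pset,
    wdd (A P) /\ Zmatrix (A P) /\ (forall i, (0 <= A P i i)) /\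
    (forall i, ~ row_sdd (A P) i -> (A P i i <= 1)).

Inductive ER : Type := Fin (r : R) | NInf | PInf.

Definition ele (x y : ER) : Prop :=
  match x, y with
  | NInf, _ => True
  | _, PInf => True
  | Fin a, Fin b => (a <= b)
  | _, _ => False
  end.
Definition elt (x y : ER) : Prop := ele x y /\ x <> y.

(* Addition: any sum containing -oo is -oo; otherwise +oo absorbs. *)
Definition eadd (x y : ER) : ER :=
  match x, y with
  | NInf, _ | _, NInf => NInf
  | PInf, _ | _, PInf => PInf
  | Fin a, Fin b => Fin (a + b)
  end.

(* Real scalar times extended real, with 0 * (+-oo) = 0. *)
Definition escal (c : R) (x : ER) : ER :=
  match x with
  | Fin a => Fin (c * a)
  | NInf => if Rlt_dec 0 c then NInf else if Rlt_dec c 0 then PInf else Fin 0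
  | PInf => if Rlt_dec 0 c then PInf else if Rlt_dec c 0 then NInf else Fin 0
  end.

Definition is_esup (S : ER -> Prop) (s : ER) : Prop :=
  (forall x, S x -> ele x s) /\ (forall b, (forall x, S x -> ele x b) -> ele s b).

Definition esup (S : ER -> Prop) : ER :=
  epsilon (inhabits NInf) (fun s => is_esup S s).

Definition yhat (M : nat) (Pset : 'I_M.+1 -> Type)
  (A : policy Pset -> rmat M.+1) (y : policy Pset -> rvec M.+1)
  (P : policy Pset) (i : 'I_M.+1) : ER :=
  if Rlt_dec (rsum_off i (fun j => Rabs (A P i j))) (Rabs (A P i i))
  then NInf else Fin (y P i).

Definition Mterm (M : nat) (Pset : 'I_M.+1 -> Type)
  (A : policy Pset -> rmat M.+1) (y : policy Pset -> rvec M.+1)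
  (X : 'I_M.+1 -> ER) (P : policy Pset) (i : 'I_M.+1) : ER :=
  eadd (eadd (escal (1 - A P i i) (X i))
             (\big[eadd/Fin R0]_(j : 'I_M.+1 | j != i) escal (- A P i j) (X j)))
       (yhat A y P i).

Definition Mop (M : nat) (Pset : 'I_M.+1 -> Type)
  (A : policy Pset -> rmat M.+1) (y : policy Pset -> rvec M.+1)
  (X : 'I_M.+1 -> ER) : 'I_M.+1 -> ER :=
  fun i => esup (fun v => exists P : policy Pset, v = Mterm A y X P i).

Definition Mpow (M : nat) (Pset : 'I_M.+1 -> Type)
  (A : policy Pset -> rmat M.+1) (y : policy Pset -> rvec M.+1)
  (k : nat) (X : 'I_M.+1 -> ER) : 'I_M.+1 -> ER :=
  iter k (Mop A y) X.

Definition H4 (M : nat) (Pset : 'I_M.+1 -> Type)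
  (A : policy Pset -> rmat M.+1) (y : policy Pset -> rvec M.+1) : Prop :=
  forall (U : rvec M.+1) (i : 'I_M.+1), exists m1 m2 : nat,
    (m1 < m2)%N /\ elt (Mpow A y m2 (fun j => Fin (U j)) i)
                       (Mpow A y m1 (fun j => Fin (U j)) i).

(* Main.v *)
Require Import Defs.
From HB Require Import structures.
From Stdlib Require Import Reals Lra FunctionalExtensionality Classical ClassicalEpsilon.
From mathcomp Require Import all_boot all_algebra.
From mathcomp Require Import Rstruct.
Import GRing.Theory.

Section Mx.
Local Open Scope ring_scope.
Lemma inv_exists n (A : rmat n) :
  (forall z : rvec n, (forall i, rsum (fun j => A i j * z j)%R = 0%R) -> forall i, z i = 0%R) ->
  exists B, is_inverse A B.
Proof.
move=> Hinj.
pose Am : 'M[R]_n := \matrix_(i, j) A i j.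
have Hdet : \det Am^T != 0.
  apply/negP => /det0P [v vn0 vA].
  move/negP: vn0; apply; apply/eqP/matrixP => a b.
  rewrite (ord1 a) mxE.
  apply: (Hinj (fun j => v 0 j)) => i.
  have := congr1 (fun M : 'M[R]_(1,n) => M 0 i) vA.
  rewrite !mxE => <-.
  rewrite /rsum; apply: eq_bigr => j _.
  by rewrite !mxE mulrC.
have Hu : Am \in unitmx by rewrite unitmxE unitfE -det_tr.
exists (fun i j => invmx Am i j); split.
- apply: functional_extensionality => i; apply: functional_extensionality => k.
  have := congr1 (fun M : 'M[R]_n => M i k) (mulmxV Hu).
  rewrite !mxE => H; rewrite /mxmul /mxid; transitivity ((i == k)%:R : R); last by case: (i == k).
  rewrite -H /rsum; apply: eq_bigr => j _; by rewrite mxE.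
- apply: functional_extensionality => i; apply: functional_extensionality => k.
  have := congr1 (fun M : 'M[R]_n => M i k) (mulVmx Hu).
  rewrite !mxE => H; rewrite /mxmul /mxid; transitivity ((i == k)%:R : R); last by case: (i == k).
  rewrite -H /rsum; apply: eq_bigr => j _; by rewrite mxE.
Qed.
End Mx.

Local Open Scope R_scope.


Section Sums.
Variable n : nat.
Implicit Types (P : pred 'I_n) (F G : 'I_n -> R).

Lemma bs_le P F G : (forall j, P j -> F j <= G j) ->
  \big[Rplus/R0]_(j | P j) F j <= \big[Rplus/R0]_(j | P j) G j.
Proof.
move=> H; apply: (big_ind2 (fun a b => a <= b)) => //; first lra.
by move=> *; lra.
Qed.

Lemma bs_add P F G : \big[Rplus/R0]_(j | P j) (F j + G j) =
  \big[Rplus/R0]_(j | P j) F j + \big[Rplus/R0]_(j | P j) G j.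
Proof. exact: big_split. Qed.

Lemma bs_scal P F c : \big[Rplus/R0]_(j | P j) (c * F j) =
  c * \big[Rplus/R0]_(j | P j) F j.
Proof.
apply: (big_ind2 (fun a b => a = c * b)) => //; first by rewrite Rmult_0_r.
by move=> ? ? ? ? -> ->; rewrite Rmult_plus_distr_l.
Qed.

Lemma bs_0 P F : (forall j, P j -> F j = 0) -> \big[Rplus/R0]_(j | P j) F j = 0.
Proof. by move=> H; apply: big1. Qed.

Lemma bs_ge0 P F : (forall j, P j -> 0 <= F j) -> 0 <= \big[Rplus/R0]_(j | P j) F j.
Proof.
move=> H; rewrite -(@bs_0 P (fun _ => 0)) //.
exact: bs_le.
Qed.

Lemma bs_D1 P F j0 : P j0 -> \big[Rplus/R0]_(j | P j) F j =
  F j0 + \big[Rplus/R0]_(j | P j && (j != j0)) F j.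
Proof. by move=> H; rewrite (bigD1 j0). Qed.

Lemma bs_zero P F : (forall j, P j -> 0 <= F j) ->
  \big[Rplus/R0]_(j | P j) F j <= 0 -> forall j, P j -> F j = 0.
Proof.
move=> H Hs j Pj; move: Hs; rewrite (@bs_D1 P F j Pj).
have := @bs_ge0 (fun i => P i && (i != j)) F.
have := H j Pj.
move=> h1 h2 h3. have h4 : 0 <= \big[Rplus/R0]_(i | P i && (i != j)) F i.
  by apply: h2 => i /andP [] /H.
lra.
Qed.

Lemma exists_max (i0 : 'I_n) F : exists k, forall j, F j <= F k.
Proof.
suff: forall s : seq 'I_n, exists k, forall j, j \in s -> F j <= F k.
  by case/(_ (enum 'I_n)) => k Hk; exists k => j; apply: Hk; rewrite mem_enum.
elim=> [|x s [k Hk]]; first by exists i0.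
destruct (Rle_dec (F x) (F k)) as [h|h].
- exists k => j; rewrite in_cons => /orP [/eqP -> //|]; exact: Hk.
- exists x => j; rewrite in_cons => /orP [/eqP -> |/Hk]; lra.
Qed.

End Sums.

Lemma rsum_add n (F a b : 'I_n -> R) :
  rsum (fun j => F j * (a j + b j)) = rsum (fun j => F j * a j) + rsum (fun j => F j * b j).
Proof. rewrite /rsum -bs_add; apply: eq_bigr => j _; ring. Qed.

Lemma rsum_scal n (F b : 'I_n -> R) c :
  rsum (fun j => F j * (c * b j)) = c * rsum (fun j => F j * b j).
Proof. rewrite /rsum -bs_scal; apply: eq_bigr => j _; ring. Qed.

Definition closed_ns {n} (A : rmat n) (K : {set 'I_n}) :=
  forall k, k \in K -> ~ row_sdd A k /\ forall j, j \notin K -> A k j = 0.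

Lemma rsum_split n (A : rmat n) k (U : rvec n) :
  rsum (fun j => A k j * U j) = A k k * U k + rsum_off k (fun j => A k j * U j).
Proof. by rewrite /rsum (bigD1 k). Qed.

Lemma off_abs n (A : rmat n) k : Zmatrix A ->
  rsum_off k (fun j => Rabs (A k j)) = rsum_off k (fun j => - A k j).
Proof.
move=> HZ; apply: eq_bigr => j Hj; apply: Rabs_left1; apply: HZ.
by move=> e; rewrite e eqxx in Hj.
Qed.

Lemma off_neg n k (F : 'I_n -> R) : rsum_off k (fun j => - F j) = - rsum_off k F.
Proof.
apply: (big_ind2 (fun a b => a = - b)) => //; first by rewrite Ropp_0.
by move=> ? ? ? ? -> ->; rewrite Ropp_plus_distr.
Qed.

Lemma MP n (A : rmat n) : wdd A -> Zmatrix A -> (forall i, 0 <= A i i) ->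
  forall z : rvec n, (forall k, rsum (fun j => A k j * z j) <= 0) ->
  forall i, 0 < z i -> exists K : {set 'I_n}, (exists k, k \in K) /\ closed_ns A K.
Proof.
move=> Hw HZ Hd z Hz i zi.
have [kmax Hmax] := @exists_max _ i z.
have [m [Hm {}Hmax]] : exists m, z kmax = m /\ forall j, z j <= m by exists (z kmax).
have mpos : 0 < m by have := Hmax i; lra.
exists [set k | z k == m]; split; first by exists kmax; rewrite inE Hm.
move=> k; rewrite inE => /eqP zk.
set o := rsum_off k (fun j => Rabs (A k j)).
have ho : o <= A k k by have := Hw k; rewrite /row_wdd Rabs_pos_eq.
have ho2 : o = - rsum_off k (fun j => A k j) by rewrite /o off_abs // off_neg.
set d := rsum_off k (fun j => A k j * (z j - m)).
have hd : forall j, j != k -> 0 <= A k j * (z j - m).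
  move=> j jk; have hne : k <> j by move=> e; rewrite e eqxx in jk.
  have := HZ k j hne.
  have := Hmax j => h1 h2; nra.
have d0 : 0 <= d by apply: bs_ge0.
have hs : rsum_off k (fun j => A k j * z j) = d + m * rsum_off k (fun j => A k j).
  rewrite /d -bs_scal -bs_add; apply: eq_bigr => j _; ring.
have := Hz k; rewrite rsum_split hs zk => h.
have nsdd : A k k <= o by nra.
split.
  rewrite /row_sdd Rabs_pos_eq // -/o; lra.
move=> j; rewrite inE => jK.
have jk : j != k by apply: contraNneq jK => ->; rewrite zk.
have dz : d <= 0 by nra.
have := @bs_zero _ _ _ hd dz _ jk.
move=> e; case: (Rmult_integral _ _ e) => // e2.
by move/eqP: jK; case; lra.
Qed.

Lemma ele_refl x : ele x x.
Proof. by case: x => //= r; lra. Qed.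

Lemma ele_trans x y z : ele x y -> ele y z -> ele x z.
Proof. by case: x; case: y; case: z => //= *; lra. Qed.

Lemma esup_ex (S : ER -> Prop) : exists s, is_esup S s.
Proof.
destruct (classic (S PInf)) as [hP|hP].
  exists PInf; split; first by case.
  by move=> b Hb; move: (Hb _ hP); clear Hb; case: b.
destruct (classic (exists r, S (Fin r))) as [[r0 hr0]|hF].
  destruct (classic (bound (fun r => S (Fin r)))) as [hb|hb].
    have [l hl] := completeness (fun r => S (Fin r)) hb (ex_intro _ r0 hr0).
    exists (Fin l); split.
      case=> [r|//|//] Hr /=; exact: (proj1 hl).
    case=> [b|//|//] Hb /=.
      apply: (proj2 hl) => r Hr; exact: (Hb _ Hr).
    by have := Hb _ hr0.
  exists PInf; split; first by case.
  case=> [b|//|//] Hb; last by have := Hb _ hr0.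
  by exfalso; apply: hb; exists b => r Hr; exact: (Hb _ Hr).
exists NInf; split; last by [].
case=> [r|//|//] Hr; first by exfalso; apply: hF; exists r.
Qed.

Lemma esup_spec S : is_esup S (esup S).
Proof. rewrite /esup; apply: epsilon_spec; exact: esup_ex. Qed.

Lemma esup_ub (S : ER -> Prop) x : S x -> ele x (esup S).
Proof. exact: (proj1 (esup_spec S)). Qed.

Lemma esup_le (S : ER -> Prop) b : (forall x, S x -> ele x b) -> ele (esup S) b.
Proof. exact: (proj2 (esup_spec S)). Qed.

Lemma escal_mono c x r : 0 <= c -> ele x (Fin r) -> ele (escal c x) (Fin (c * r)).
Proof.
move=> hc; case: x => [a|_|//] /=.
  move=> h; apply: Rmult_le_compat_l => //.
destruct (Rlt_dec 0 c) as [h1|h1] => //; destruct (Rlt_dec c 0) as [h2|h2] => /=; first lra.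
have -> : c = 0 by lra.
lra.
Qed.

Lemma eadd_mono a b c d : ele a (Fin b) -> ele c (Fin d) -> ele (eadd a c) (Fin (b + d)).
Proof. by case: a => [a||] //; case: c => [c||] //= *; lra. Qed.

Arguments eadd_mono {a b c d}.
Arguments ele_trans {x y z}.

Lemma eadd_NInf x : eadd x NInf = NInf.
Proof. by case: x. Qed.

Lemma escal_0 x : escal (- 0) x = Fin 0.
Proof.
rewrite Ropp_0; case: x => [r||] /=; first by rewrite Rmult_0_l.
- by destruct (Rlt_dec 0 0); [lra|].
- by destruct (Rlt_dec 0 0); [lra|].
Qed.

Lemma fin_eps (T : finType) (Q : T -> R -> Prop) :
  (forall t e e', 0 < e' <= e -> Q t e -> Q t e') ->
  (forall t, exists e, 0 < e /\ Q t e) -> exists e, 0 < e /\ forall t, Q t e.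
Proof.
move=> Hmon Hex.
suff: forall s : seq T, exists e, 0 < e /\ forall t, t \in s -> Q t e.
  by case/(_ (enum T)) => e [he H]; exists e; split => // t; apply: H; rewrite mem_enum.
elim=> [|x s [e [he H]]]; first by exists 1; split => //; lra.
have [e' [he' H']] := Hex x.
exists (Rmin e e'); split; first by apply: Rmin_pos.
move=> t; rewrite in_cons => /orP [/eqP ->|ts].
  apply: (Hmon _ e'); last exact: H'.
  split; [exact: Rmin_pos | exact: Rmin_r].
apply: (Hmon _ e); last exact: H.
split; [exact: Rmin_pos | exact: Rmin_l].
Qed.

Section Main.
Variable M : nat.
Variable Pset : 'I_M.+1 -> Type.
Variable A : policy Pset -> rmat M.+1.
Variable y : policy Pset -> rvec M.+1.
Hypothesis Hdec : row_decoupled A y.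
Hypothesis HH3 : H3 A.

Lemma row_eq P k : ~ row_sdd (A P) k -> rsum_off k (fun j => - A P k j) = A P k k.
Proof.
move=> hn; have [Hw [HZ [Hd _]]] := HH3 P.
rewrite -off_abs //; have := Hw k; rewrite /row_wdd /row_sdd Rabs_pos_eq // in hn * => h.
lra.
Qed.

Lemma bt_split U P k : bellman_term A y U P k =
  - (A P k k * U k) + rsum_off k (fun j => - A P k j * U j) + y P k.
Proof.
rewrite /bellman_term rsum_split.
have -> : rsum_off k (fun j => - A P k j * U j) = - rsum_off k (fun j => A P k j * U j).
  rewrite -off_neg; apply: eq_bigr => j _; ring.
ring.
Qed.

Lemma Mterm_upper (X : 'I_M.+1 -> ER) (U : rvec M.+1) P k :
  (forall j, ele (X j) (Fin (U j))) -> bellman_term A y U P k <= 0 ->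
  ele (Mterm A y X P k) (Fin (U k)).
Proof.
move=> HX Hb; rewrite /Mterm /yhat.
destruct (Rlt_dec _ _) as [h|hn]; first by rewrite eadd_NInf.
have [Hw [HZ [Hd H1]]] := HH3 P.
have hk1 := H1 k hn.
have e1 := @escal_mono (1 - A P k k) (X k) (U k) ltac:(lra) (HX k).
have e2 : ele (\big[eadd/Fin R0]_(j | j != k) escal (- A P k j) (X j))
              (Fin (rsum_off k (fun j => - A P k j * U j))).
  apply: (big_ind2 (fun e r => ele e (Fin r))) => //=; first lra.
    by move=> *; apply: eadd_mono.
  move=> j jk; apply: escal_mono => //.
  have hne : k <> j by move=> e; rewrite e eqxx in jk.
  have := HZ k j hne; lra.
apply: (ele_trans (eadd_mono (eadd_mono e1 e2) (ele_refl (Fin (y P k))))) => /=.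
move: Hb; rewrite bt_split; lra.
Qed.

Lemma Mterm_lower (X : 'I_M.+1 -> ER) (U : rvec M.+1) (K : {set 'I_M.+1}) P k c eps :
  k \in K -> ~ row_sdd (A P) k -> (forall j, j \notin K -> A P k j = 0) ->
  (forall j, j \in K -> exists x, X j = Fin x /\ U j - c <= x) ->
  - eps <= bellman_term A y U P k ->
  exists x, Mterm A y X P k = Fin x /\ U k - c - eps <= x.
Proof.
move=> kK hn hcl HX Hb.
pose zf j := match X j with Fin r => r | _ => U j end.
have HXz : forall j, j \in K -> X j = Fin (zf j) /\ U j - c <= zf j.
  move=> j jK; have [x [ex hx]] := HX j jK; by rewrite /zf ex.
have [Hw [HZ [Hd H1]]] := HH3 P.
have hk1 := H1 k hn.
have e2 : \big[eadd/Fin R0]_(j | j != k) escal (- A P k j) (X j)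
            = Fin (rsum_off k (fun j => - A P k j * zf j)).
  apply: (big_ind2 (fun e r => e = Fin r)) => //=.
    by move=> ? ? ? ? -> ->.
  move=> j jk; case: (boolP (j \in K)) => jK.
    by rewrite (proj1 (HXz j jK)).
  by rewrite hcl // escal_0 Ropp_0 Rmult_0_l.
have ey : yhat A y P k = Fin (y P k).
  by rewrite /yhat; destruct (Rlt_dec _ _) as [h|h] => //.
rewrite /Mterm ey e2 (proj1 (HXz k kK)) /=.
eexists; split; first reflexivity.
have h1 : (1 - A P k k) * (U k - c) <= (1 - A P k k) * zf k.
  apply: Rmult_le_compat_l; first lra. exact: (proj2 (HXz k kK)).
have h2 : rsum_off k (fun j => - A P k j * (U j - c)) <= rsum_off k (fun j => - A P k j * zf j).
  apply: bs_le => j jk; case: (boolP (j \in K)) => jK.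
    apply: Rmult_le_compat_l; last exact: (proj2 (HXz j jK)).
    have hne : k <> j by move=> e; rewrite e eqxx in jk.
    have := HZ k j hne; lra.
  by rewrite hcl //; lra.
have h3 : rsum_off k (fun j => - A P k j * (U j - c)) =
          rsum_off k (fun j => - A P k j * U j) + (- c) * rsum_off k (fun j => - A P k j).
  rewrite -bs_scal -bs_add; apply: eq_bigr => j _; ring.
have h4 := row_eq P k hn.
move: Hb; rewrite bt_split; nra.
Qed.

Lemma Mpow_upper U : bellman_solution A y U ->
  forall m k, ele (Mpow A y m (fun j => Fin (U j)) k) (Fin (U k)).
Proof.
move=> HU; elim=> [|m IH] k; first exact: ele_refl.
rewrite /Mpow /= /Mop; apply: esup_le => x [P ->].
apply: Mterm_upper => //.
exact: (proj1 (HU k) _ (ex_intro _ P erefl)).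
Qed.

Lemma Mpow_lower U (K : {set 'I_M.+1}) eps : bellman_solution A y U ->
  (exists P, closed_ns (A P) K /\ forall k, k \in K -> - eps <= bellman_term A y U P k) ->
  forall m k, k \in K ->
  exists x, Mpow A y m (fun j => Fin (U j)) k = Fin x /\ U k - INR m * eps <= x.
Proof.
move=> HU [P [Hcl HP]]; elim=> [|m IH] k kK.
  exists (U k); split => //=; lra.
have [hn hz] := Hcl k kK.
have [x0 [e0 h0]] := @Mterm_lower (Mpow A y m (fun j => Fin (U j))) U K P k
   (INR m * eps) eps kK hn hz IH (HP k kK).
have hub := Mpow_upper U HU m.+1 k.
have hlb : ele (Fin x0) (Mpow A y m.+1 (fun j => Fin (U j)) k).
  rewrite -e0 /=; apply: esup_ub; by exists P.
move: hub hlb; case: (Mpow A y m.+1 (fun j => Fin (U j)) k) => [x||] h1 h2;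
  [| by case: h2 | by case: h1].
exists x; split => //; rewrite S_INR; simpl in h1, h2; lra.
Qed.

Hypothesis HH4 : H4 A y.

Lemma H4use U (K : {set 'I_M.+1}) : bellman_solution A y U -> (exists k, k \in K) ->
  ~ (forall eps, 0 < eps -> exists P, closed_ns (A P) K /\
        forall k, k \in K -> - eps <= bellman_term A y U P k).
Proof.
move=> HU [i iK] Hall.
have Hfix : forall m, Mpow A y m (fun j => Fin (U j)) i = Fin (U i).
  move=> m; have hub := Mpow_upper U HU m i.
  have hlb : forall eps, 0 < eps -> exists x,
      Mpow A y m (fun j => Fin (U j)) i = Fin x /\ U i - INR m * eps <= x.
    move=> eps he; exact: (Mpow_lower U K eps HU (Hall eps he) m i iK).
  have [x [ex _]] := hlb 1 Rlt_0_1.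
  rewrite ex in hub *; congr Fin; simpl in hub.
  apply: Rle_antisym => //.
  apply: Rnot_lt_le => hlt.
  have hm := pos_INR m.
  have he : 0 < (U i - x) / (INR m + 1) by apply: Rdiv_lt_0_compat; lra.
  have [x' [ex' hx']] := hlb _ he.
  rewrite ex in ex'; case: ex' => ex'; subst x'.
  have : INR m * ((U i - x) / (INR m + 1)) < U i - x.
    apply: (Rmult_lt_reg_r (INR m + 1)); first lra.
    field_simplify; [nra | lra].
  lra.
have [m1 [m2 [_ [_ hne]]]] := HH4 U i.
by apply: hne; rewrite !Hfix.
Qed.

Hypothesis HH1 : H1 A.

Lemma le_sol U V : bellman_solution A y U -> bellman_solution A y V -> forall i, U i <= V i.
Proof.
move=> HU HV.
have [C HC] := HH1.
have [e0 [he0 H0]] : exists e, 0 < e /\ forall K : {set 'I_M.+1}, (exists k, k \in K) ->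
    forall P, closed_ns (A P) K -> (forall k, k \in K -> - e <= bellman_term A y U P k) -> False.
  apply: (@fin_eps {set 'I_M.+1} (fun (K : {set 'I_M.+1}) (e : R) => (exists k, k \in K) -> forall P, closed_ns (A P) K ->
      (forall k, k \in K -> - e <= bellman_term A y U P k) -> False)).
  - move=> K e e' he Hq Hne P Hcl Hb; apply: (Hq Hne P Hcl) => k kK; have := Hb k kK; lra.
  - move=> K; case: (classic (exists k, k \in K)) => [Hne|Hne]; last first.
      by exists 1; split; [lra | by []].
    have := H4use U K HU Hne; move/not_all_ex_not => [e He].
    exists e; split.
      apply: NNPP => hn; apply: He => he; lra.
    move=> _ P Hcl Hb; apply: He => _; exists P; split => //.
pose K0 := rsum (fun _ : 'I_M.+1 => C).
have Hbound : forall eps, 0 < eps -> eps <= e0 -> forall i, U i - V i <= eps * K0.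
  move=> eps he hle.
  have Hex : forall k, exists P, - eps <= bellman_term A y U P k.
    move=> k; apply: NNPP => hn.
    have hub : is_upper_bound (fun r => exists P, r = bellman_term A y U P k) (- eps).
      move=> r [P ->]; apply: Rnot_lt_le => hl; apply: hn; exists P; lra.
    have := proj2 (HU k) _ hub; lra.
  have [f Hf] := fin_all_exists Hex.
  pose P : policy Pset := fun k => f k k.
  have HProw : forall k, (forall j, A P k j = A (f k) k j) /\ y P k = y (f k) k.
    by move=> k; apply: Hdec.
  have HbtP : forall k, - eps <= bellman_term A y U P k.
    move=> k; have [h1 h2] := HProw k; have := Hf k; rewrite /bellman_term h2.
    suff -> : rsum (fun j => A P k j * U j) = rsum (fun j => A (f k) k j * U j) by [].
    by apply: eq_bigr => j _; rewrite h1.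
  have [Hw [HZ [Hd _]]] := HH3 P.
  have noK : forall K : {set 'I_M.+1}, (exists k, k \in K) -> closed_ns (A P) K -> False.
    move=> K Hne Hcl; apply: (H0 K Hne P Hcl) => k _; have := HbtP k; lra.
  have Hinj : forall z : rvec M.+1, (forall i, rsum (fun j => A P i j * z j) = 0) ->
      forall i, z i = 0.
    move=> z Hz i; case: (Rtotal_order (z i) 0) => [hlt|[//|hgt]].
    - have hn : forall k, rsum (fun j => A P k j * (-1 * z j)) <= 0.
        by move=> k; rewrite rsum_scal Hz; lra.
      have hzi : 0 < -1 * z i by lra.
      have [K [Hne Hcl]] := @MP _ (A P) Hw HZ Hd (fun j => -1 * z j) hn i hzi.
      by case: (noK K Hne Hcl).
    - have hn : forall k, rsum (fun j => A P k j * z j) <= 0.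
        by move=> k; rewrite Hz; lra.
      have [K [Hne Hcl]] := @MP _ (A P) Hw HZ Hd z hn i hgt.
      by case: (noK K Hne Hcl).
  have [B HB] := @inv_exists _ (A P) Hinj.
  have HBC := HC P B HB.
  pose w := fun j => rsum (fun l => B j l * eps).
  have Hw1 : forall k, rsum (fun j => A P k j * w j) = eps.
    move=> k.
    transitivity (rsum (fun j => rsum (fun l => A P k j * B j l * eps))).
      apply: eq_bigr => j _; rewrite /w /rsum -bs_scal; apply: eq_bigr => l _; ring.
    rewrite /rsum exchange_big /=.
    transitivity (rsum (fun l => mxid k l * eps)).
      apply: eq_bigr => l _; rewrite -(proj1 HB) /mxmul /rsum.
      rewrite Rmult_comm -bs_scal; apply: eq_bigr => j _; ring.
    rewrite /rsum (bigD1 k) //= bs_0; first by rewrite /mxid eqxx; ring.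
    by move=> l lk; rewrite /mxid eq_sym (negbTE lk); ring.
  move=> i.
  pose z := fun j => U j + -1 * (V j + w j).
  have Hz : forall k, rsum (fun j => A P k j * z j) <= 0.
    move=> k; rewrite /z rsum_add rsum_scal rsum_add Hw1.
    have h1 := HbtP k.
    have h2 := proj1 (HV k) _ (ex_intro _ P erefl).
    move: h1 h2; rewrite /bellman_term; lra.
  have hzi : z i <= 0.
    apply: Rnot_lt_le => hz.
    have [K [Hne Hcl]] := @MP _ (A P) Hw HZ Hd z Hz i hz.
    exact: (noK K Hne Hcl).
  have hwi : w i <= eps * K0.
    rewrite /w /K0 /rsum -bs_scal; apply: bs_le => l _.
    have := HBC i l; have := Rle_abs (B i l); nra.
  move: hzi; rewrite /z; lra.
move=> i; apply: Rnot_lt_le => hlt.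
have hK := Rabs_pos K0.
pose eps := Rmin e0 ((U i - V i) / (2 * (Rabs K0 + 1))).
have hq : 0 < (U i - V i) / (2 * (Rabs K0 + 1)).
  apply: Rdiv_lt_0_compat; lra.
have he : 0 < eps by apply: Rmin_pos.
have h1 := Hbound eps he (Rmin_l _ _) i.
have h2 : eps <= (U i - V i) / (2 * (Rabs K0 + 1)) by apply: Rmin_r.
have h3 : eps * (2 * (Rabs K0 + 1)) <= U i - V i.
  have := Rmult_le_compat_r (2 * (Rabs K0 + 1)) _ _ ltac:(lra) h2.
  rewrite /Rdiv Rmult_assoc Rinv_l; lra.
have := Rle_abs K0; nra.
Qed.

End Main.

Theorem theorem3p8 (M : nat) (Pset : 'I_M.+1 -> Type)
  (Pne : forall i, inhabited (Pset i))
  (A : policy Pset -> rmat M.+1) (y : policy Pset -> rvec M.+1)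
  (Hdec : row_decoupled A y)
  (HH1 : H1 A) (HH3 : H3 A) (HH4 : H4 A y) :
  forall U V : rvec M.+1,
    bellman_solution A y U -> bellman_solution A y V -> forall i, U i = V i.
Proof.
move=> U V HU HV i; apply: Rle_antisym.
- by eapply le_sol; eassumption.
- by eapply le_sol; eassumption.
Qed.
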